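(* Let $\mathcal G$ be a DAG, $\mathbf Y$ a vertex set, $\boldsymbol\alpha$ a proper set of directed paths live for $\mathbf Y$, and $\pi_{\mathfrak a_{\boldsymbol\alpha}}$ a path intervention that is natural for $\mathbf Y$, with $\boldsymbol\alpha^*\subseteq\boldsymbol\alpha$ the set of all paths assigned constant values by $\pi$. Then $p(\mathbf Y(\mathfrak a_{\boldsymbol\alpha}))=p(\mathbf Y(\mathfrak a_{\boldsymbol\alpha^*}))$, where $\mathfrak a_{\boldsymbol\alpha^*}$ is the restriction of $\mathfrak a_{\boldsymbol\alpha}$ to $\boldsymbol\alpha^*$.
   Context: Let $\mathcal G$ be a DAG with finite vertex set $\mathbf V$; vertices are random variables with state spaces $\mathfrak X_V$; $\mathrm{pa}(V)$ are parents. A causal structure is a collection of one-step potential outcomes $V(\mathbf b)$, $\mathbf b\in\prod_{W\in\mathrm{pa}(V)}\mathfrak X_W$, with a joint distribution; other counterfactuals are defined by recursive substitution, and the natural (observed) value of $V$ is the response to no intervention. A directed path is $A_1\to\cdots\to A_k$ with distinct vertices (source $A_1$, sink $A_k$); subpaths are contiguous; prefix subpaths contain the source. A set of paths is proper if none is a prefix subpath of another. A path intervention on a proper set $\boldsymbol\alpha$ assigns to each path $\alpha$ with source $A$ an element of the extended state space $\mathfrak X_A\cup\{A\}$: either a constant value of $A$ or the natural value $A$ (the observed variable). Funnel operator $\lhd_{(WY)}$: replace each path $(A\ldots WY)$ by $(A\ldots W)$, delete every other path containing $W$, keep the rest; the funneled assignment keeps assignments and gives $(A\ldots W)$ the assignment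 of $(A\ldots WY)$. Response: $V(\mathfrak a_{\boldsymbol\alpha})=V(\mathfrak a_{\{(WV)\in\boldsymbol\alpha\}},\{W(\mathfrak a_{\lhd_{(WV)}(\boldsymbol\alpha)}):W\in\mathrm{pa}(V),(WV)\notin\boldsymbol\alpha\})$ recursively, where a parent $W$ whose single-edge path $(WV)$ is in $\boldsymbol\alpha$ is set to its assigned constant, or to the natural variable $W$ if assigned the natural value. A directed path $\gamma$ with sink in $\mathbf Y$ is relevant for $\mathbf Y$ given a set of paths $\boldsymbol\beta$ if no path of $\boldsymbol\beta$ is a subpath of $\gamma$ except possibly a prefix subpath; $\mathrm{rel}_{\mathcal G}(\mathbf Y\mid\boldsymbol\beta)$ is their set. $\boldsymbol\alpha$ is live for $\mathbf Y$ if every $\alpha\in\boldsymbol\alpha$ is a prefix subpath of some element of $\mathrm{rel}_{\mathcal G}(\mathbf Y\mid\boldsymbol\alpha)$. With $\boldsymbol\alpha$ live for $\mathbf Y$ and $\boldsymbol\alpha^*$ the paths assigned constants (the rest natural values), $\pi$ is natural for $\mathbf Y$ if no element of $\mathrm{rel}_{\mathcal G}(\mathbf Y\mid\boldsymbol\alpha^* )$ that has a prefix subpath in $\boldsymbol\alpha^*$ contains a subpath in $\boldsymbol\alpha\setminus\boldsymbol\alpha^*$. *)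

(* Defs.v *)
From HB Require Import structures.
From mathcomp Require Import all_boot all_order.


Set Implicit Arguments.
Unset Strict Implicit.
Unset Printing Implicit Defensive.

Definition acyclic (V : finType) (e : rel V) : Prop :=
  forall u x : V, e u x -> ~~ connect e x u.

Record dag (V : finType) := Dag { dedge : rel V; dacyclic : acyclic dedge }.

Definition anc (V : finType) (e : rel V) (v : V) : {set V} :=
  [set u | [exists x, e u x && connect e x v]].

Lemma anc_proper (V : finType) (G : dag V) (w v : V) :
  dedge G w v -> anc (dedge G) w \proper anc (dedge G) v.
Proof.
move=> Hwv; apply/properP; split.
  apply/subsetP=> u; rewrite !inE => /existsP [x /andP [Hux Hxw]].
  apply/existsP; exists x; rewrite Hux /=.
  apply: connect_trans Hxw _; exact: connect1.
exists w; rewrite !inE.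
  by apply/existsP; exists v; rewrite Hwv connect0.
apply/negP=> /existsP [x /andP [Hwx Hxw]].
by move: (dacyclic Hwx); rewrite Hxw.
Qed.
Lemma dag_wf (V : finType) (G : dag V) :
  well_founded (fun w v : V => dedge G w v).
Proof.
move=> v.
have [n] := ubnP #|anc (dedge G) v|; elim: n v => [v H|n IH v Hv].
  by rewrite ltn0 in H.
constructor=> w Hwv; apply: IH.
have H := proper_card (anc_proper Hwv).
by rewrite -ltnS; apply: leq_trans Hv.
Qed.

Definition dpath (V : finType) (G : dag V) (s : seq V) : bool :=
  if s is x :: t then path (dedge G) x t && uniq s else false.

(* subpath = contiguous subsequence (seq.infix); prefix subpath = seq.prefix *)

Definition proper_paths (V : finType) (al : seq (seq V)) : Prop :=
  forall a b, a \in al -> b \in al -> a != b -> ~~ prefix a b.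

Definition relevant (V : finType) (G : dag V) (Y : {set V})
    (beta : seq (seq V)) (gamma : seq V) : Prop :=
  [/\ dpath G gamma, (if gamma is x :: t then last x t \in Y else false)
    & forall b, b \in beta -> infix b gamma -> prefix b gamma].

Definition live (V : finType) (G : dag V) (Y : {set V}) (al : seq (seq V)) : Prop :=
  forall a, a \in al -> exists gamma, relevant G Y al gamma /\ prefix a gamma.

(* an assigned path: source [psrc], remaining vertices [ptail], and an
   element of the extended state space X_A u {A}:
   [Some c] = the constant c, [None] = the natural value of the source *)
Record pitem (V : finType) (X : V -> Type) :=
  PItem { psrc : V; ptail : seq V; pval : option (X psrc) }.

Definition ppath (V : finType) (X : V -> Type) (i : pitem X) : seq V :=
  psrc i :: ptail i.

Definition paths_of (V : finType) (X : V -> Type) (pi : seq (pitem X)) :=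
  map (@ppath V X) pi.

Definition is_const (V : finType) (X : V -> Type) (i : pitem X) : bool :=
  if pval i is Some _ then true else false.

Definition const_part (V : finType) (X : V -> Type) (pi : seq (pitem X)) :=
  filter (@is_const V X) pi.

Definition path_intervention (V : finType) (G : dag V) (X : V -> Type)
    (pi : seq (pitem X)) : Prop :=
  [/\ all (fun i => dpath G (ppath i) && (1 < size (ppath i))) pi,
      uniq (paths_of pi)
    & proper_paths (paths_of pi)].

Definition ends_with (V : finType) (s : seq V) (w y : V) : bool :=
  (1 < size s) && (nth w s (size s).-2 == w) && (last w s == y).

Definition funnel_item (V : finType) (X : V -> Type) (w y : V) (i : pitem X)
  : seq (pitem X) :=
  if ends_with (ppath i) w y then
    [:: @PItem _ _ (psrc i) (take (size (ptail i)).-1 (ptail i)) (pval i)]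
  else if w \in ppath i then [::] else [:: i].

Definition funnel (V : finType) (X : V -> Type) (w y : V) (pi : seq (pitem X)) :=
  flatten (map (funnel_item w y) pi).

Fixpoint lookup_edge (V : finType) (X : V -> Type) (pi : seq (pitem X)) (w v : V)
  : option (option (X w)) :=
  match pi with
  | [::] => None
  | i :: pi' =>
      if ptail i == [:: v] then
        match psrc i =P w with
        | ReflectT e => Some (ecast z (option (X z)) e (pval i))
        | ReflectF _ => lookup_edge pi' w v
        end
      else lookup_edge pi' w v
  end.

Definition parents (V : finType) (G : dag V) (v : V) := {w : V | dedge G w v}.

(* one-step potential outcomes V(b), b a value of the parents, as random
   variables on a sample space Omega *)
Definition causal_structure (V : finType) (G : dag V) (X : V -> Type) (Omega : Type) :=
  forall v : V, (forall w : parents G v, X (val w)) -> Omega -> X v.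

Section Response.
Variables (V : finType) (G : dag V) (X : V -> Type) (Omega : Type)
  (po : causal_structure G X Omega).

Definition response_step (v : V)
    (rec : forall w : V, dedge G w v -> seq (pitem X) -> Omega -> X w)
    (pi : seq (pitem X)) (om : Omega) : X v :=
  po (fun w : parents G v =>
        match lookup_edge pi (val w) v with
        | Some (Some c) => c
        | Some None => rec (val w) (valP w) [::] om
        | None => rec (val w) (valP w) (funnel (val w) v pi) om
        end) om.

Definition response : forall v : V, seq (pitem X) -> Omega -> X v :=
  Fix (dag_wf G) (fun v => seq (pitem X) -> Omega -> X v) response_step.

End Response.

Definition natural_for (V : finType) (G : dag V) (X : V -> Type) (Y : {set V})
    (pi : seq (pitem X)) : Prop :=
  let al := paths_of pi in
  let als := paths_of (const_part pi) in
  forall gamma, relevant G Y als gamma ->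
    (exists2 a, a \in als & prefix a gamma) ->
    forall b, b \in al -> b \notin als -> ~~ infix b gamma.

Definition Yresponse (V : finType) (G : dag V) (X : V -> Type) (Omega : Type)
    (po : causal_structure G X Omega) (Y : {set V}) (pi : seq (pitem X))
    (om : Omega) : forall y : {y : V | y \in Y}, X (val y) :=
  fun y => response po (val y) pi om.
Arguments Yresponse {V G X Omega} po Y pi om.
Arguments response {V G X Omega} po v pi om.

(* Main.v *)
Require Import Defs.
From HB Require Import structures.
From mathcomp Require Import all_boot all_order.
From mathcomp Require Import classical_sets reals measure probability.
From Stdlib Require Import FunctionalExtensionality.
Set Implicit Arguments.
Unset Strict Implicit.
Unset Printing Implicit Defensive.

Fixpoint lookup_path (V : finType) (X : V -> Type) (pi : seq (pitem X)) (w : V) (t : seq V)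
  : option (option (X w)) :=
  match pi with
  | [::] => None
  | i :: pi' =>
      if ptail i == t then
        match psrc i =P w with
        | ReflectT e => Some (ecast z (option (X z)) e (pval i))
        | ReflectF _ => lookup_path pi' w t
        end
      else lookup_path pi' w t
  end.

Lemma lookup_edge_path (V : finType) (X : V -> Type) (S : seq (pitem X)) w v :
  lookup_edge S w v = lookup_path S w [:: v].
Proof. by elim: S => //= i S ->. Qed.

Lemma lookup_cat (V : finType) (X : V -> Type) (s1 s2 : seq (pitem X)) x t :
  lookup_path (s1 ++ s2) x t =
  if lookup_path s1 x t is Some o then Some o else lookup_path s2 x t.
Proof.
elim: s1 => //= i s1 IH; case: ifP => _ //; case: (psrc i =P x) => //.
Qed.

Lemma lookup_funnel_item (V : finType) (X : V -> Type) (i : pitem X) u v x a :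
  lookup_path (funnel_item u v i) x (rcons a u) =
  lookup_path [:: i] x (rcons (rcons a u) v).
Proof.
case: i => s tl o; rewrite /funnel_item /ppath /=.
case: ifP => He.
  move: He; case: tl / lastP => [|t z]; first by rewrite /ends_with.
  rewrite /ends_with /= last_rcons => /andP [_ /eqP ->] /=.
  by rewrite size_rcons /= -cats1 take_size_cat // cats1 eqseq_rcons eqxx andbT.
case: ifP => Hu /=.
  case: ifP => // /eqP Htl; move: He; rewrite Htl /ends_with /= !size_rcons /=.
  by rewrite nth_rcons size_rcons ltnSn nth_rcons ltnn eqxx last_rcons !eqxx.
have h1 : (tl == rcons a u) = false.
  by apply/negbTE/eqP => Htl; move: Hu; rewrite Htl inE mem_rcons inE eqxx !orbT.
have h2 : (tl == rcons (rcons a u) v) = false.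
  by apply/negbTE/eqP => Htl; move: Hu; rewrite Htl inE !mem_rcons !inE mem_rcons inE eqxx !orbT.
by rewrite h1 h2.
Qed.

Lemma lookup_funnel (V : finType) (X : V -> Type) (S : seq (pitem X)) u v x a :
  lookup_path (funnel u v S) x (rcons a u) = lookup_path S x (rcons (rcons a u) v).
Proof.
elim: S => [|i S IH] //.
have -> : funnel u v (i :: S) = funnel_item u v i ++ funnel u v S by [].
rewrite lookup_cat lookup_funnel_item IH.
by rewrite -[i :: S]cat1s lookup_cat.
Qed.

Fixpoint Kp (V : finType) (X : V -> Type) (S : seq (pitem X)) (acc r : seq V) (w : V)
  : option (X w) :=
  match r with
  | [::] => if lookup_path S w acc is Some (Some c) then Some c else None
  | u :: r' => if lookup_path S u acc is None then Kp S (u :: acc) r' w else None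
  end.

Lemma Kp_funnel (V : finType) (X : V -> Type) (S : seq (pitem X)) u v r a w :
  Kp (funnel u v S) (rcons a u) r w = Kp S (rcons (rcons a u) v) r w.
Proof.
elim: r a => [|x r IH] a /=; rewrite lookup_funnel //.
by case: (lookup_path S x _) => //; exact: (IH (x :: a)).
Qed.

Lemma Kp_nil (V : finType) (X : V -> Type) (acc r : seq V) w :
  Kp ([::] : seq (pitem X)) acc r w = None.
Proof. by elim: r acc => //= u r IH acc. Qed.

Lemma responseE (V : finType) (G : dag V) (X : V -> Type) (Omega : Type)
  (po : causal_structure G X Omega) v S om :
  response po v S om =
  po v (fun w : parents G v =>
        match lookup_edge S (val w) v with
        | Some (Some c) => c
        | Some None => response po (val w) [::] om
        | None => response po (val w) (funnel (val w) v S) om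
        end) om.
Proof.
rewrite /response Fix_eq //.
move=> x f g H; apply: functional_extensionality_dep => pi.
apply: functional_extensionality_dep => om'.
rewrite /response_step; congr (po _ _ om').
apply: functional_extensionality_dep => w.
by rewrite !H.
Qed.

Lemma K_lemma (V : finType) (G : dag V) (X : V -> Type) (Omega : Type)
  (po : causal_structure G X Omega) v :
  forall S S', (forall r w, Kp S [:: v] r w = Kp S' [:: v] r w) ->
  forall om, response po v S om = response po v S' om.
Proof.
move: v; apply: (well_founded_ind (dag_wf G)) => v IH S S' H om.
rewrite !responseE; congr (po _ _ om).
apply: functional_extensionality_dep => w.
have Hr := H [::] (val w); rewrite /= in Hr.
have Hf : forall T : seq (pitem X), lookup_path T (val w) [:: v] = None -> forall r z,
    Kp (funnel (val w) v T) [:: val w] r z = Kp T [:: v] (val w :: r) z.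
  by move=> T HT r z /=; rewrite HT (Kp_funnel T (val w) v r [::] z).
rewrite !lookup_edge_path.
case E1: (lookup_path S (val w) [:: v]) Hr => [[c|]|];
case E2: (lookup_path S' (val w) [:: v]) => [[c'|]|] //=; try by case.
- move=> _; apply: (IH (val w) (valP w)).
  by move=> r z; rewrite Kp_nil Hf // -H /= E1.
- move=> _; apply: (IH (val w) (valP w)).
  by move=> r z; rewrite Kp_nil Hf // H /= E2.
- move=> _; apply: (IH (val w) (valP w)).
  by move=> r z; rewrite !Hf // H.
Qed.

Lemma lookup_some (V : finType) (X : V -> Type) (T : seq (pitem X)) x t o :
  lookup_path T x t = Some o -> x :: t \in paths_of T.
Proof.
elim: T => //= i T IH; rewrite inE.
case: ifP => [/eqP Ht|_]; last by move/IH ->; rewrite orbT.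
case: (psrc i =P x) => [e _|_ /IH ->]; last by rewrite orbT.
by rewrite /ppath e Ht eqxx.
Qed.

Lemma lookup_notin (V : finType) (X : V -> Type) (T : seq (pitem X)) x t :
  x :: t \notin paths_of T -> lookup_path T x t = None.
Proof.
case E: (lookup_path T x t) => [o|] //.
by rewrite (lookup_some E).
Qed.

Definition isNone (A : Type) (o : option A) := if o is None then true else false.

Lemma ecast_isNone (V : finType) (X : V -> Type) (a b : V) (e : a = b) (o : option (X a)) :
  isNone (ecast z (option (X z)) e o) = isNone o.
Proof. by case: b / e. Qed.

Lemma paths_cp_sub (V : finType) (X : V -> Type) (S : seq (pitem X)) :
  {subset paths_of (const_part S) <= paths_of S}.
Proof.
move=> p; elim: S => //= i S IH; rewrite /const_part /=.
case: (is_const i) => /=; rewrite !inE.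
  by case/orP => [->|/IH ->] //; rewrite orbT.
by move/IH ->; rewrite orbT.
Qed.

Lemma lookup_cp (V : finType) (X : V -> Type) (S : seq (pitem X)) x t :
  uniq (paths_of S) ->
  lookup_path (const_part S) x t =
  match lookup_path S x t with Some (Some c) => Some (Some c) | _ => None end.
Proof.
elim: S => //= i S IH /andP [Hn Hu].
rewrite /const_part /= -/(const_part S).
case Hc: (is_const i) => /=.
  case: ifP => _; last exact: IH.
  case: (psrc i =P x) => [e|_]; last exact: IH.
  move: (ecast_isNone e (pval i)) Hc; rewrite /is_const.
  by case: (ecast _ _ e _) => [c|] //; case: (pval i).
case: ifP => [/eqP Ht|_]; last exact: IH.
case: (psrc i =P x) => [e|_]; last exact: IH.
rewrite lookup_notin; last first.
  apply: contra Hn => /paths_cp_sub; by rewrite /ppath e Ht.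
move: (ecast_isNone e (pval i)) Hc; rewrite /is_const.
by case: (ecast _ _ e _) => [c|] //; case: (pval i).
Qed.

Lemma Kp_some (V : finType) (X : V -> Type) (T : seq (pitem X)) r acc w c :
  Kp T acc r w = Some c -> w :: catrev r acc \in paths_of T.
Proof.
elim: r acc => [|u r IH] acc /=.
  by case E: (lookup_path T w acc) => [[c'|]|] // _; exact: lookup_some E.
by case: (lookup_path T u acc) => // /IH.
Qed.

Lemma live_contra (V : finType) (G : dag V) (Y : {set V}) (al : seq (seq V))
  r w u acc :
  live G Y al -> w :: catrev r (u :: acc) \in al -> u :: acc \in al -> False.
Proof.
move=> hL Hg Hb.
have [g [[Hd _ Hinf] /prefixP [s Hgs]]] := hL _ Hg.
have Hi : infix (u :: acc) g.
  apply/infixP; exists (w :: rev r), s; by rewrite Hgs catrevE /= -catA.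
have /prefixP [s' Hs'] := Hinf _ Hb Hi.
have Hu : uniq g.
  by move: Hd; rewrite Hgs /dpath /= => /and3P [_ H1 H2]; rewrite H1 H2.
move: Hu; rewrite Hgs catrevE. idtac.
have Hwu : w = u by move: Hs'; rewrite Hgs; case.
rewrite Hwu /= => /andP [Hn _]; move: Hn.
by rewrite !mem_cat inE eqxx !orbT.
Qed.

Lemma Kp_cp (V : finType) (G : dag V) (Y : {set V}) (X : V -> Type)
  (S : seq (pitem X)) :
  uniq (paths_of S) -> live G Y (paths_of S) ->
  forall r acc w, Kp S acc r w = Kp (const_part S) acc r w.
Proof.
move=> hU hL; elim=> [|u r IH] acc w /=.
  by rewrite lookup_cp //; case: (lookup_path S w acc) => [[c|]|].
rewrite (lookup_cp _ _ hU).
case E: (lookup_path S u acc) => [o|]; last exact: IH.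
have Hb := lookup_some E.
have K0 : Kp (const_part S) (u :: acc) r w = None.
  case E2: (Kp (const_part S) (u :: acc) r w) => [c|] //.
  have := paths_cp_sub (Kp_some E2).
  by move/(live_contra hL)/(_ Hb).
by case: o E => [c|] _ /=; rewrite ?K0.
Qed.

Unset Implicit Arguments.
Local Open Scope classical_set_scope.

Theorem lemma5
  (d : measure_display) (Omega : measurableType d) (R : realType)
  (P : probability Omega R)
  (V : finType) (G : dag V) (X : V -> Type)
  (po : causal_structure G X Omega)
  (Y : {set V}) (pi : seq (pitem X)) :
  path_intervention G pi ->
  live G Y (paths_of pi) ->
  natural_for G Y pi ->
  forall A : set (forall y : {y : V | y \in Y}, X (val y)),
    measurable [set om | A (Yresponse po Y pi om)] ->
    measurable [set om | A (Yresponse po Y (const_part pi) om)] ->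
    P [set om | A (Yresponse po Y pi om)] =
    P [set om | A (Yresponse po Y (const_part pi) om)].
Proof.
move=> [_ hU _] hL _ A _ _.
have E : forall om, Yresponse po Y pi om = Yresponse po Y (const_part pi) om.
  move=> om; apply: functional_extensionality_dep => y.
  apply: K_lemma => r w; exact: (Kp_cp hU hL).
have -> : [set om | A (Yresponse po Y pi om)] =
          [set om | A (Yresponse po Y (const_part pi) om)].
  by apply: eq_set => om; rewrite E.
by [].
Qed.
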